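(* Let $1\le k\le r$ and let $\mathscr I=[I_0,\dots,I_{k-1}]$ be a prime ideal of $\Omega_{H_{k-1}}$. Then $\mathcal{L}\mathscr I=[I_0,\dots,I_{k-1},(\mathrm{res}^k_{k-1})^{-1}(I_{k-1})]$ is a prime ideal of $\Omega_{H_k}$.
   Context: Fix a prime $p$ and an integer $r\ge0$. For $0\le k\le r$ let $R_k$ be the commutative ring which is free as a $\mathbb{Z}$-module with basis $X_{k,0},\dots,X_{k,k}$ and multiplication $X_{k,i}X_{k,j}=p^{k-\max(i,j)}X_{k,\min(i,j)}$; thus $X_{k,k}=1$, and an integer $n$ is identified with $nX_{k,k}$. For $0\le k\le\ell\le r$ define: the additive map $\mathrm{ind}^\ell_k:R_k\to R_\ell$, $X_{k,i}\mapsto X_{\ell,i}$; the ring homomorphism $\mathrm{res}^\ell_k:R_\ell\to R_k$, $\mathrm{res}^\ell_k(X_{\ell,i})=p^{\ell-k}X_{k,i}$ if $i\le k$ and $=p^{\ell-i}$ if $i\ge k$; and the multiplicative map $\mathrm{jnd}^\ell_k:R_k\to R_\ell$, $$\mathrm{jnd}^\ell_k\Big(\sum_{i=0}^k m_iX_{k,i}\Big)=m_kX_{\ell,\ell}+\sum_{k\le i<\ell}\frac{m_k^{p^{\ell-i}}-m_k^{p^{\ell-i-1}}}{p^{\ell-i}}X_{\ell,i}+\sum_{0\le i<k}\frac{(\sum_{s=i}^k m_sp^{k-s})^{p^{\ell-k}}-(\sum_{s=i+1}^k m_sp^{k-s})^{p^{\ell-k}}}{p^{\ell-i}}X_{\ell,i}$$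 ($m_i\in\mathbb{Z}$). For $k=\ell$ these maps are the identity. These data form the Burnside Tambara functor on $\mathbb{Z}/p^r\mathbb{Z}$; keeping indices $\le n$ gives $\Omega_{H_n}$. An ideal of $\Omega_{H_n}$ is a sequence $[I_0,\dots,I_n]$ of ideals $I_k\subseteq R_k$ such that for every $1\le k\le n$: $\mathrm{ind}^k_{k-1}(I_{k-1})\subseteq I_k$, $\mathrm{res}^k_{k-1}(I_k)\subseteq I_{k-1}$, $\mathrm{jnd}^k_{k-1}(I_{k-1})\subseteq I_k$. It is proper if $I_0\ne R_0$. A proper ideal is prime if for all $0\le\ell\le k\le n$, $a\in R_k$, $b\in R_\ell$: whenever $(\mathrm{jnd}^m_i\mathrm{res}^k_i(a))\cdot(\mathrm{jnd}^m_j\mathrm{res}^\ell_j(b))\in I_m$ for all $0\le i\le k$, $0\le j\le\ell$, $m=\max(i,j)$, then $a\in I_k$ or $b\in I_\ell$. *)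

(* Defs.v *)
From HB Require Import structures.
From mathcomp Require Import all_boot all_order all_algebra.
Set Implicit Arguments. Unset Strict Implicit. Unset Printing Implicit Defensive.
Import Order.TTheory GRing.Theory Num.Theory.
Local Open Scope ring_scope.

(* Elements of R_k: coefficient vectors (m_0,...,m_k) w.r.t. the Z-basis
   X_{k,0},...,X_{k,k}. *)
Definition elt (k : nat) := {ffun 'I_k.+1 -> int}.

Definition cf (k : nat) (a : elt k) (i : nat) : int :=
  if (i <= k)%N then a (inord i) else 0.

Definition mk (k : nat) (f : nat -> int) : elt k := [ffun i : 'I_k.+1 => f (val i)].

Definition zero (k : nat) : elt k := [ffun => 0].
Definition add (k : nat) (a b : elt k) : elt k := [ffun i => a i + b i].
Definition opp (k : nat) (a : elt k) : elt k := [ffun i => - a i].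

(* X_{k,i} X_{k,j} = p^(k - max(i,j)) X_{k,min(i,j)}, extended bilinearly *)
Definition mul (p k : nat) (a b : elt k) : elt k :=
  [ffun m : 'I_k.+1 => \sum_(i < k.+1) \sum_(j < k.+1)
     (if minn i j == m then a i * b j * (p%:Z) ^+ (k - maxn i j) else 0)].

Definition ind (p l k : nat) (a : elt k) : elt l := mk l (cf a).

(* res^l_k : R_l -> R_k ; X_{l,i} |-> p^(l-k) X_{k,i} (i <= k), p^(l-i) (i >= k) *)
Definition res (p l k : nat) (a : elt l) : elt k :=
  mk k (fun j => if (j < k)%N then (p%:Z) ^+ (l - k) * cf a j
                 else \sum_(k <= i < l.+1) (p%:Z) ^+ (l - i) * cf a i).

Definition psum (p k : nat) (a : elt k) (t : nat) : int :=
  \sum_(t <= s < k.+1) cf a s * (p%:Z) ^+ (k - s).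

(* jnd^l_k : R_k -> R_l (the exact integer divisions are written with divz) *)
Definition jnd (p l k : nat) (a : elt k) : elt l :=
  mk l (fun i =>
    if i == l then cf a k
    else if (k <= i)%N then
      divz (cf a k ^+ (expn p (l - i)) - cf a k ^+ (expn p (l - i - 1)))
           ((p%:Z) ^+ (l - i))
    else
      divz (psum p a i ^+ (expn p (l - k)) - psum p a i.+1 ^+ (expn p (l - k)))
           ((p%:Z) ^+ (l - i))).

Arguments ind p l k a : clear implicits.
Arguments res p l k a : clear implicits.
Arguments jnd p l k a : clear implicits.

Definition is_ring_ideal (p k : nat) (J : elt k -> Prop) : Prop :=
  [/\ J (zero k),
      (forall a b, J a -> J b -> J (add a b)),
      (forall a, J a -> J (opp a)) &
      (forall a b, J b -> J (mul p a b))].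

(* an ideal [I_0,...,I_n] of Omega_{H_n}; components I_j for j > n are ignored *)
Definition is_ideal (p n : nat) (I : forall j, elt j -> Prop) : Prop :=
  (forall k, (k <= n)%N -> is_ring_ideal p (I k)) /\
  (forall k, (1 <= k <= n)%N ->
     [/\ (forall a, I k.-1 a -> I k (ind p k k.-1 a)),
         (forall a, I k a -> I k.-1 (res p k k.-1 a)) &
         (forall a, I k.-1 a -> I k (jnd p k k.-1 a))]).

Definition is_proper_ideal (p n : nat) (I : forall j, elt j -> Prop) : Prop :=
  is_ideal p n I /\ ~ (forall a : elt 0, I 0 a).

Definition is_prime_ideal (p n : nat) (I : forall j, elt j -> Prop) : Prop :=
  is_proper_ideal p n I /\
  forall k l, (l <= k <= n)%N -> forall (a : elt k) (b : elt l),
    (forall i j, (i <= k)%N -> (j <= l)%N ->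
       I (maxn i j) (mul p (jnd p (maxn i j) i (res p k i a))
                           (jnd p (maxn i j) j (res p l j b)))) ->
    I k a \/ I l b.

Definition lift_ideal (p k : nat) (I : forall j, elt j -> Prop) :
  forall j, elt j -> Prop :=
  fun j a => if (j < k)%N then I j a else I k.-1 (res p j k.-1 a).

(* Main.v *)
From HB Require Import structures.
From mathcomp Require Import all_boot all_order all_algebra.
From mathcomp Require Import zify ring lra.
Require Import Defs.
Set Implicit Arguments. Unset Strict Implicit. Unset Printing Implicit Defensive.
Import Order.TTheory GRing.Theory Num.Theory.
Local Open Scope ring_scope.

Lemma PoszX' (n k : nat) : ((n ^ k)%N : int) = (n : int) ^+ k.
Proof. elim: k => [|k IH]; first by rewrite expr0 expn0. by rewrite expnS exprS PoszM IH. Qed.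

Lemma dvd_subXX (x y : int) n : (x - y %| x ^+ n - y ^+ n)%Z.
Proof. by rewrite subrXX dvdz_mulr. Qed.

Lemma fermat_nat (p n : nat) : prime p -> ((p : int) %| (n : int) ^+ p - (n : int))%Z.
Proof.
move=> pp; rewrite -eqz_mod_dvd -PoszX' !modz_nat.
by rewrite fermat_little.
Qed.

Lemma fermat_int (p : nat) (m : int) : prime p -> ((p : int) %| m ^+ p - m)%Z.
Proof.
move=> pp; have p0 : (0 < p)%N by apply: prime_gt0.
case: m => [n|n]; first exact: fermat_nat.
set m := Negz n.
have Hy : m + (p : int) * (n.+1 : int) = ((p.-1 * n.+1)%N : int).
  rewrite /m NegzE; move: p0; case: (p) => [//|q] _ /=; lia.
set y := m + (p:int) * (n.+1:int).
have h1 : ((p : int) %| y - m)%Z by rewrite /y (addrC m) addrK dvdz_mulr.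
have h2 : ((p : int) %| y ^+ p - m ^+ p)%Z by apply: dvdz_trans h1 (dvd_subXX _ _ _).
have h3 : ((p : int) %| y ^+ p - y)%Z by rewrite /y Hy fermat_nat.
have -> : m ^+ p - m = (y ^+ p - y) - (y ^+ p - m ^+ p) + (y - m) by ring.
by rewrite rpredD // rpredB.
Qed.

Lemma dvd_powp (p n : nat) (x y d : int) : (0 < n)%N ->
  x = y + (p : int) ^+ n * d -> ((p : int) ^+ n.+1 %| x ^+ p - y ^+ p)%Z.
Proof.
move=> n0 ->{x}; rewrite subrXX exprSr; apply: dvdz_mul.
  by rewrite addrC addKr dvdz_mulr.
set x' := y + _.
have hp : ((p : int) %| x' - y)%Z.
  rewrite /x' addrC addKr -(prednK n0) exprS -mulrA dvdz_mulr //.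
have -> : \sum_(i < p) x' ^+ (p.-1 - i) * y ^+ i =
   \sum_(i < p) (x' ^+ (p.-1 - i) - y ^+ (p.-1 - i)) * y ^+ i +
   \sum_(i < p) y ^+ (p.-1 - i) * y ^+ i.
  by rewrite -big_split /=; apply: eq_bigr => i _; ring.
apply: rpredD.
  apply: rpred_sum => i _; apply: dvdz_mulr; exact: dvdz_trans hp (dvd_subXX _ _ _).
have -> : \sum_(i < p) y ^+ (p.-1 - i) * y ^+ i = \sum_(i < p) y ^+ p.-1.
  apply: eq_bigr => i _; rewrite -exprD subnK //; have := ltn_ord i; lia.
by rewrite sumr_const card_ord -mulr_natr natz dvdz_mull.
Qed.

Section Ghost.
Variable p : nat.
Hypothesis p0 : (0 < p)%N.
Local Notation P := (p%:Z).

Lemma P_neq0 n : P ^+ n != 0.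
Proof. apply: expf_neq0; apply/eqP; lia. Qed.

Lemma cf_mk k f i : cf (mk k f) i = if (i <= k)%N then f i else 0.
Proof. rewrite /cf /mk; case: ifP => // h; rewrite ffunE; congr f; exact: inordK. Qed.

Lemma cf_ord k (a : elt k) (i : 'I_k.+1) : cf a i = a i.
Proof. by rewrite /cf -ltnS ltn_ord inord_val. Qed.

Lemma cf_over k (a : elt k) i : (k < i)%N -> cf a i = 0.
Proof. by rewrite /cf ltnNge => /negbTE ->. Qed.

Lemma eltP k (a b : elt k) : (forall i, (i <= k)%N -> cf a i = cf b i) -> a = b.
Proof.
move=> h; apply/ffunP => i; rewrite -!cf_ord; apply: h; by rewrite -ltnS.
Qed.

Lemma psum_S k (a : elt k) t : (t <= k)%N ->
  psum p a t = cf a t * P ^+ (k - t) + psum p a t.+1.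
Proof. by move=> h; rewrite /psum big_ltn. Qed.

Lemma psum_over k (a : elt k) : psum p a k.+1 = 0.
Proof. by rewrite /psum big_geq. Qed.

Lemma psum_inj k (a b : elt k) :
  (forall t, (t <= k)%N -> psum p a t = psum p b t) -> a = b.
Proof.
move=> h; apply: eltP => i hi.
have e := h i hi; rewrite (psum_S a hi) (psum_S b hi) in e.
have e2 : psum p a i.+1 = psum p b i.+1.
  case: (ltnP i k) => hik; first by apply: h.
  have -> : i = k by apply/eqP; rewrite eqn_leq hi hik.
  by rewrite !psum_over.
rewrite e2 in e; move/addIr: e; exact: (mulIf (P_neq0 _)).
Qed.

Lemma cf_add k (a b : elt k) i : cf (add a b) i = cf a i + cf b i.
Proof. by rewrite /cf; case: ifP => _; rewrite ?ffunE ?addr0. Qed.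
Lemma cf_opp k (a : elt k) i : cf (opp a) i = - cf a i.
Proof. by rewrite /cf; case: ifP => _; rewrite ?ffunE ?oppr0. Qed.
Lemma cf_zero k i : cf (zero k) i = 0.
Proof. by rewrite /cf; case: ifP => _; rewrite ?ffunE. Qed.

Lemma psum_add k (a b : elt k) t : psum p (add a b) t = psum p a t + psum p b t.
Proof. rewrite /psum -big_split; apply: eq_bigr => s _; by rewrite cf_add mulrDl. Qed.
Lemma psum_opp k (a : elt k) t : psum p (opp a) t = - psum p a t.
Proof. rewrite /psum -sumrN; apply: eq_bigr => s _; by rewrite cf_opp mulNr. Qed.
Lemma psum_zero k t : psum p (zero k) t = 0.
Proof. rewrite /psum big1 // => s _; by rewrite cf_zero mul0r. Qed.

Lemma psum_mul k (a b : elt k) t :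
  psum p (mul p a b) t = psum p a t * psum p b t.
Proof.
transitivity (\sum_(i < k.+1) \sum_(j < k.+1)
   (if (t <= minn i j)%N then a i * b j * P ^+ (k - maxn i j) * P ^+ (k - minn i j) else 0)).
  rewrite /psum big_geq_mkord.
  transitivity (\sum_(m < k.+1 | (t <= m)%N) \sum_(i < k.+1) \sum_(j < k.+1)
     (if minn i j == m then a i * b j * P ^+ (k - maxn i j) * P ^+ (k - m) else 0)).
    apply: eq_bigr => m _; rewrite cf_ord ffunE mulr_suml; apply: eq_bigr => i _.
    rewrite mulr_suml; apply: eq_bigr => j _; by case: ifP; rewrite ?mul0r.
  rewrite exchange_big; apply: eq_bigr => i _; rewrite exchange_big; apply: eq_bigr => j _ /=.
  rewrite -big_mkcondr /=.
  case: (leqP t (minn i j)) => ht.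
    have hm : (minn i j < k.+1)%N by rewrite gtn_min ltn_ord.
    rewrite (big_pred1 (Ordinal hm)) /=; last first.
      move=> m /=; rewrite -val_eqE /= eq_sym; case: eqP => [->|_]; by rewrite ?ht ?andbF.
    by [].
  rewrite big_pred0 // => m /=; case: eqP => [<-|_]; by rewrite ?andbF // leqNgt ht.
rewrite /psum !big_geq_mkord big_distrl /=.
rewrite [RHS]big_mkcond; apply: eq_bigr => i _ /=.
rewrite big_distrr [in RHS]big_mkcond /=.
case hti: (t <= i)%N; last by rewrite big1 // => j _; rewrite leq_min hti.
apply: eq_bigr => j _ /=.
rewrite leq_min hti !cf_ord; case: (t <= j)%N => //=.
rewrite -mulrA -exprD.
have -> : (k - maxn i j + (k - minn i j) = (k - i) + (k - j))%N.
  have:= ltn_ord i; have:= ltn_ord j; lia.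
rewrite exprD; ring.
Qed.


Lemma psum_res l k (a : elt l) t : (k <= l)%N -> (t <= k)%N ->
  psum p (res p l k a) t = psum p a t.
Proof.
move=> hkl htk; rewrite /psum big_nat_recr //= [RHS](@big_cat_nat _ _ _ k) //=; last by lia.
congr (_ + _).
  apply: eq_big_nat => s /andP[_ hs].
  rewrite /res cf_mk (ltnW hs) hs.
  have -> : (l - s = (l - k) + (k - s))%N by lia.
  rewrite exprD; ring.
rewrite /res cf_mk leqnn ltnn subnn expr0 mulr1; apply: eq_bigr => i _; by rewrite mulrC.
Qed.

Lemma res_mul l k (a b : elt l) : (k <= l)%N ->
  res p l k (mul p a b) = mul p (res p l k a) (res p l k b).
Proof. move=> h; apply: psum_inj => t ht; by rewrite psum_mul !psum_res // psum_mul. Qed.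
Lemma res_add l k (a b : elt l) : (k <= l)%N ->
  res p l k (add a b) = add (res p l k a) (res p l k b).
Proof. move=> h; apply: psum_inj => t ht; by rewrite psum_add !psum_res // psum_add. Qed.
Lemma res_opp l k (a : elt l) : (k <= l)%N ->
  res p l k (opp a) = opp (res p l k a).
Proof. move=> h; apply: psum_inj => t ht; by rewrite psum_opp !psum_res // psum_opp. Qed.
Lemma res_zero l k : (k <= l)%N -> res p l k (zero l) = zero k.
Proof. move=> h; apply: psum_inj => t ht; by rewrite psum_res // !psum_zero. Qed.
Lemma res_res l k i (a : elt l) : (i <= k)%N -> (k <= l)%N ->
  res p k i (res p l k a) = res p l i a.
Proof.
move=> h1 h2; apply: psum_inj => t ht; rewrite !psum_res //; lia.
Qed.

Definition topc K (c : int) : elt K := mk K (fun j => if j == K then c else 0).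

Lemma psum_topc K c t : (t <= K)%N -> psum p (topc K c) t = c.
Proof.
move=> h; rewrite /psum big_nat_recr //= /topc cf_mk leqnn eqxx subnn expr0 mulr1.
rewrite big_nat_cond big1 ?add0r // => s /andP[/andP[_ hs] _].
by rewrite cf_mk (ltnW hs) (ltn_eqF hs) mul0r.
Qed.

Lemma res_ind K (a : elt K) :
  res p K.+1 K (ind p K.+1 K a) = mul p (topc K P) a.
Proof.
apply: psum_inj => t ht; rewrite psum_res // psum_mul psum_topc //.
rewrite /psum big_nat_recr /=; last by lia.
rewrite /ind cf_mk leqnn cf_over // mul0r addr0 mulr_sumr.
apply: eq_big_nat => s /andP[_ hs].
rewrite cf_mk; last first.
rewrite ifT; last by lia.
rewrite subSn; last by lia.
rewrite exprSr; ring.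
Qed.


Lemma psum_jnd K (a : elt K) t : prime p -> (t <= K)%N ->
  psum p (jnd p K.+1 K a) t = psum p a t ^+ p.
Proof.
move=> pp ht.
have e1 : (K.+1 - K = 1)%N by lia.
have hK1 : cf (jnd p K.+1 K a) K.+1 = cf a K by rewrite /jnd cf_mk leqnn eqxx.
have hK : cf (jnd p K.+1 K a) K * P = cf a K ^+ p - cf a K.
  rewrite /jnd cf_mk ifT; last by lia.
  have -> : (K == K.+1) = false by lia.
  rewrite leqnn e1 subnn expn0 expn1 expr1 -[P in _ * P]expr1.
  by apply: divzK; rewrite expr1 fermat_int.
have hs : forall s, (s < K)%N ->
    cf (jnd p K.+1 K a) s * P ^+ (K.+1 - s) = psum p a s ^+ p - psum p a s.+1 ^+ p.
  move=> s hs; rewrite /jnd cf_mk ifT; last by lia.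
  have -> : (s == K.+1) = false by lia.
  have -> : (K <= s)%N = false by lia.
  rewrite e1 expn1; apply: divzK.
  have -> : (K.+1 - s = (K - s).+1)%N by lia.
  apply: (dvd_powp (d := cf a s)); first by lia.
  rewrite psum_S; [ring | lia].
have hQK : psum p a K = cf a K.
  by rewrite psum_S // psum_over subnn expr0 mulr1 addr0.
rewrite /psum big_nat_recr /=; last by lia.
rewrite big_nat_recr //= hK1 e1 expr1 hK subnn expr0 mulr1.
under eq_big_nat => s /andP[_ hs'] do rewrite (hs s hs').
rewrite (@telescope_sumr_eq _ _ _ (fun s => - psum p a s ^+ p)) //; last first.
  by move=> s _; rewrite opprK addrC.
rewrite -/(psum p a t) -/(psum p a K) hQK; ring.
Qed.

Definition pw K (a : elt K) n : elt K := iter n (mul p a) (topc K 1).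

Lemma psum_pw K (a : elt K) n t : (t <= K)%N -> psum p (pw a n) t = psum p a t ^+ n.
Proof.
move=> ht; elim: n => [|n IH]; first by rewrite expr0 /pw /= psum_topc.
by rewrite /pw iterS psum_mul -/(pw a n) IH exprS.
Qed.

Lemma res_jnd K (a : elt K) : prime p ->
  res p K.+1 K (jnd p K.+1 K a) = mul p (pw a p.-1) a.
Proof.
move=> pp; apply: psum_inj => t ht.
rewrite psum_res // psum_jnd // psum_mul psum_pw // -exprSr prednK //.
Qed.

End Ghost.

Theorem corollary4 (p r k : nat) (I : forall j, elt j -> Prop) :
  prime p -> (1 <= k <= r)%N -> is_prime_ideal p k.-1 I ->
  is_prime_ideal p k (lift_ideal p k I).
Proof.
move=> pp /andP[hk _]; have p0 := prime_gt0 pp.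
case: k hk => [//|K] _ /=.
move=> [[[Hid Hcomp] Hprop] Hpr].
split; [split; [split|] |].
- move=> j hj; case: (leqP j K) => hjK.
    rewrite /lift_ideal ltnS hjK; exact: Hid.
  have ej : j = K.+1 by lia.
  subst j; rewrite /lift_ideal ltnn /=.
  have [z0 hadd hopp hmul] := Hid K (leqnn K).
  split => /=.
  + by rewrite (res_zero p0).
  + by move=> a b ha hb; rewrite (res_add p0) //; exact: hadd.
  + by move=> a ha; rewrite (res_opp p0) //; exact: hopp.
  + by move=> a b hb; rewrite (res_mul p0) //; exact: hmul.
- move=> j /andP[hj1 hj]; case: (leqP j K) => hjK.
    have [h1 h2 h3] := Hcomp j (introT andP (conj hj1 hjK)).
    have hj' : (j.-1 < K.+1)%N by lia.
    rewrite /lift_ideal hj' ltnS hjK /=; split; [exact: h1 | exact: h2 | exact: h3].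
  have ej : j = K.+1 by lia.
  subst j; rewrite /lift_ideal ltnn ltnSn /=.
  have [z0 hadd hopp hmul] := Hid K (leqnn K).
  split => a ha.
  + rewrite (res_ind p0); exact: hmul.
  + exact: ha.
  + rewrite (res_jnd p0) //; exact: hmul.
- move=> h; apply: Hprop => a; have := h a; by rewrite /lift_ideal.
- move=> k' l /andP[hlk hk'] a b H.
  case: (leqP k' K) => hk'K.
    have hlK : (l <= K)%N by lia.
    rewrite /lift_ideal !ltnS hk'K hlK.
    apply: (Hpr k' l) => [|i j hi hj]; first by rewrite hlk hk'K.
    have hm : (maxn i j < K.+1)%N by lia.
    by have := H i j hi hj; rewrite /lift_ideal hm.
  have ek : k' = K.+1 by lia.
  subst k'.
  case: (leqP l K) => hlK.
    rewrite /lift_ideal ltnn ltnS hlK /=.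
    apply: (Hpr K l _ (res p K.+1 K a) b) => [|i j hi hj]; first by rewrite hlK leqnn.
    rewrite (res_res p0) //; try lia.
    have hm : (maxn i j < K.+1)%N by lia.
    by have := H i j (leq_trans hi (leqnSn K)) hj; rewrite /lift_ideal hm.
  have el : l = K.+1 by lia.
  subst l.
  rewrite /lift_ideal ltnn /=.
  apply: (Hpr K K _ (res p K.+1 K a) (res p K.+1 K b)) => [|i j hi hj]; first by rewrite leqnn.
  rewrite !(res_res p0) //; try lia.
  have hm : (maxn i j < K.+1)%N by lia.
  by have := H i j (leq_trans hi (leqnSn K)) (leq_trans hj (leqnSn K)); rewrite /lift_ideal hm.
Qed.
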